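(* Let $2/5 < r < 1$, put $p = \left\lceil \frac{5r-2}{1-r} \right\rceil$ and $\alpha = p - \frac{5r-2}{1-r}$, and let $\alpha = (0.\alpha_1 \alpha_2 \cdots)_2$ be the binary expansion of $\alpha$ with infinitely many zero digits. Define binary words $w^{\langle 0 \rangle} = \emptyset$ and $w^{\langle i \rangle} = w^{\langle i-1 \rangle} w^{\langle i-1 \rangle}\, 01011\, 0^{p - \alpha_i}$ for $i \geq 1$; each $w^{\langle i \rangle}$ is a proper prefix of $w^{\langle i+1 \rangle}$, and let $w$ be the infinite binary word which is the limit of this sequence. Then $\lim_{n \to \infty} |Z(w^{(n)})|/n = r$.
   Context: For a binary word $x$, $x^j$ denotes $j$ concatenated copies of $x$ ($x^0$ is empty), and juxtaposition denotes concatenation. $w^{(n)}$ denotes the initial subword of length $n$ of $w$, and $Z(u)$ is the set of indices $i$ with $u_i = 0$. *)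

(* Defs.v *)
From HB Require Import structures.
From mathcomp Require Import all_boot all_order all_algebra.
From mathcomp Require Import all_classical all_reals all_analysis.
Set Implicit Arguments. Unset Strict Implicit. Unset Printing Implicit Defensive.
Import Order.TTheory GRing.Theory Num.Theory.
Local Open Scope ring_scope.

(* Binary words are [seq bool]; digit 0 is [false], digit 1 is [true]. *)

(* i-th binary digit (i >= 1) of alpha >= 0, in the expansion with infinitely
   many zero digits: alpha_i = floor(2^i alpha) mod 2. *)
Definition bin_digit {R : realType} (alpha : R) (i : nat) : bool :=
  odd (absz (Num.floor (alpha * 2 ^+ i))).

Fixpoint wstage (p : nat) (a : nat -> bool) (i : nat) : seq bool :=
  match i with
  | 0 => [::]
  | i'.+1 =>
      let u := wstage p a i' in
      u ++ u ++ [:: false; true; false; true; true] ++ nseq (p - a i'.+1)%N false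
  end.

(* The limit infinite word: its n-th letter is the n-th letter of w^<n+1>
   (which has length >= 5(2^(n+1)-1) > n; the stages are prefixes of each other). *)
Definition wlim (p : nat) (a : nat -> bool) (n : nat) : bool :=
  nth false (wstage p a n.+1) n.

Definition wprefix (w : nat -> bool) (n : nat) : seq bool := mkseq w n.

Definition nzeros (u : seq bool) : nat := count negb u.

(* Main.v *)
Require Import Defs.
From HB Require Import structures.
From mathcomp Require Import all_boot all_order all_algebra.
From mathcomp Require Import all_classical all_reals all_analysis.
From mathcomp Require Import zify ring lra.
Import Order.TTheory GRing.Theory Num.Theory.
Import numFieldNormedType.Exports.
Local Open Scope classical_set_scope.
Local Open Scope ring_scope.

Lemma wstage_prefix p a i j : (i <= j)%N -> exists t, wstage p a j = wstage p a i ++ t.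
Proof.
elim: j => [|j IH]; first by rewrite leqn0 => /eqP ->; exists [::]; rewrite cats0.
rewrite leq_eqVlt => /orP [/eqP -> | ]; first by exists [::]; rewrite cats0.
rewrite ltnS => /IH [t Ht] /=. rewrite Ht -catA. by eexists.
Qed.

Lemma wstage_size p a i : (i <= size (wstage p a i))%N.
Proof.
elim: i => [|i IH] //=. rewrite !size_cat /=. lia.
Qed.

Lemma wprefixE p a n : wprefix (wlim p a) n = take n (wstage p a n).
Proof.
apply: (@eq_from_nth _ false).
  by rewrite size_mkseq size_takel // wstage_size.
move=> k; rewrite size_mkseq => kn.
rewrite nth_mkseq // nth_take // /wlim.
have [t ->] := @wstage_prefix p a k.+1 n kn.
rewrite nth_cat; have := wstage_size p a k.+1; case: ltnP => //; lia.
Qed.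
Definition FF {R : realType} (r : R) (s : seq bool) : R :=
  (nzeros s)%:R - r * (size s)%:R.

Lemma FF_cat {R : realType} (r : R) s t : FF r (s ++ t) = FF r s + FF r t.
Proof. rewrite /FF /nzeros count_cat size_cat !natrD; ring. Qed.

Lemma FF_size {R : realType} (r : R) s : 0 <= r <= 1 -> `|FF r s| <= (size s)%:R.
Proof.
move=> /andP[r0 r1]; rewrite /FF /nzeros.
have h1 : (count negb s <= size s)%N by apply: count_size.
have h2 : (count negb s)%:R <= (size s)%:R :> R by rewrite ler_nat.
have h3 : 0 <= (count negb s)%:R :> R by [].
rewrite ler_norml; apply/andP; split; nra.
Qed.

Lemma take_cat_le (T : Type) n (s t : seq T) : (n <= size s)%N -> take n (s ++ t) = take n s.
Proof.
move=> h; rewrite take_cat; case: ltnP => // h2.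
have -> : n = size s by apply/eqP; rewrite eqn_leq h h2.
by rewrite subnn take0 cats0 take_size.
Qed.

Lemma take_bound {R : realType} (r : R) p a :
  0 <= r <= 1 -> (forall j, `|FF r (wstage p a j)| <= 1) ->
  forall i n, (n <= size (wstage p a i))%N ->
  `|FF r (take n (wstage p a i))| <= (p + 7)%:R * (trunc_log 2 n).+1%:R.
Proof.
move=> hr hE; elim=> [|j IH] n.
  by rewrite /= leqn0 => /eqP ->; rewrite /FF /nzeros /= mulr0 subr0 normr0 mulr_ge0.
set u := wstage p a j.
have Dge : 1 <= (p + 7)%:R :> R by rewrite ler1n addnS.
rewrite /= !size_cat => hn.
have [nu|un] := leqP n (size u).
  by rewrite take_cat_le //; apply: IH.
rewrite take_cat ltnNge (ltnW un) /=.
set m := (n - size u)%N.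
have [mu|um] := leqP m (size u).
  rewrite take_cat_le //.
  rewrite FF_cat.
  have := IH m mu.
  have m0 : (0 < m)%N by rewrite /m; lia.
  have tl : ((trunc_log 2 m).+1 <= trunc_log 2 n)%N.
    apply: trunc_log_max => //; rewrite expnS.
    have := trunc_logP (isT : (1 < 2)%N) m0. rewrite /m; lia.
  have tlR : (trunc_log 2 m).+1%:R + 1 <= (trunc_log 2 n).+1%:R :> R.
    by rewrite natr1 ler_nat ltnS.
  have := hE j; rewrite -/u => h1 h2.
  apply: (le_trans (ler_normD _ _)).
  have : (p + 7)%:R * ((trunc_log 2 m).+1%:R + 1) <= (p + 7)%:R * (trunc_log 2 n).+1%:R :> R.
    by rewrite ler_pM2l // ltr0n addnS.
  nra.
rewrite take_cat ltnNge (ltnW um) /= !FF_cat.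
set b := take _ _.
have hb : `|FF r b| <= (p + 5)%:R.
  apply: (le_trans (FF_size _ _ hr)); rewrite ler_nat /b size_take /=.
  case: ifP; rewrite size_nseq; lia.
have := hE j; rewrite -/u => h1.
have t0 : 1 <= (trunc_log 2 n).+1%:R :> R by rewrite ler1n.
have e : (p + 7)%:R = (p + 5)%:R + 2 :> R by rewrite -natrD -addnA.
have h : `|FF r u + (FF r u + FF r b)| <= 1 + (1 + (p+5)%:R).
  apply: le_trans (ler_normD _ _) _; apply: lerD => //.
  apply: le_trans (ler_normD _ _) _; exact: lerD.
apply: le_trans h _; rewrite e. have : 0 <= (p+5)%:R :> R by []. nra.
Qed.
Lemma floor_double {R : realType} (y : R) : 0 <= y ->
  Num.floor (y * 2) = 2 * Num.floor y + (odd (absz (Num.floor (y * 2))))%:R.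
Proof.
move=> y0.
have f0 : 0 <= Num.floor y by rewrite floor_ge0.
have h1 : 2 * Num.floor y <= Num.floor (y * 2).
  rewrite floor_ge_int rmorphM /=. have := floor_le y. rewrite [(2:int)%:~R]/=. 
  by move=> h; rewrite mulrC ler_pM2r.
have h2 : Num.floor (y * 2) < 2 * Num.floor y + 2.
  rewrite floor_lt_int rmorphD rmorphM /=. have := floorD1_gt y.
  rewrite rmorphD /= => h. nra.
move: h1 h2; case: (Num.floor (y * 2)) => [g|g]; case: (Num.floor y) f0 => [f|f] //= _.
- move=> h1 h2. have : (g = 2 * f \/ g = 2 * f + 1)%N by lia.
  by case=> ->; rewrite ?oddD ?oddM /=; lia.
all: lia.
Qed.

Lemma FF_block {R : realType} (r : R) (P : nat) (d : bool) : (1 <= P)%N ->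
  FF r ([:: false; true; false; true; true] ++ nseq (P - d) false) =
  2 + (P%:R - d%:R) - r * (5 + (P%:R - d%:R)).
Proof.
move=> P1; rewrite /FF /nzeros /= count_nseq size_nseq /= mul1n.
rewrite -natrB; last by case: d.
rewrite !natrD /=. ring.
Qed.

Lemma FF_stage {R : realType} (r : R) (P : nat) (alpha x : R) :
  0 <= alpha -> alpha < 1 -> (1 - r) * x = 5 * r - 2 -> P%:R - x = alpha -> (1 <= P)%N ->
  forall j, FF r (wstage P (bin_digit alpha) j) =
    (1 - r) * (alpha * 2 ^+ j - (Num.floor (alpha * 2 ^+ j))%:~R - alpha).
Proof.
move=> a0 a1 hx hP P1; elim=> [|j IH].
  rewrite /FF /nzeros /= expr0 mulr1 (@floor_def _ _ 0); first by rewrite mulr0 subr0 /=; ring.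
  by rewrite a0 /= add0r.
rewrite /= !FF_cat IH FF_block //.
rewrite /bin_digit exprS mulrCA (mulrC 2).
set F := Num.floor (alpha * 2 ^+ j). set G := Num.floor (alpha * 2 ^+ j * 2).
have hG : G = 2 * F + (odd `|G|)%:R by apply: floor_double; rewrite mulr_ge0 // exprn_ge0.
set d := odd `|G|.
have hGR : G%:~R = 2 * F%:~R + d%:R :> R.
  by rewrite hG intrD intrM /= -pmulrn mulrz_nat.
rewrite hGR. nra.
Qed.

Lemma sq_le_pow k : ((k + 1) ^ 2 <= 4 * 2 ^ k)%N.
Proof.
elim: k => [|k IH] //; case: k IH => [|[|k]] IH //.
rewrite (expnS 2); move: IH; rewrite -!mulnn; nia.
Qed.

Theorem lemma4p14 (R : realType) (r : R) (hr1 : 2 / 5 < r) (hr2 : r < 1) :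
  let x := (5 * r - 2) / (1 - r) in
  let p : int := Num.ceil x in
  let alpha : R := p%:~R - x in
  let w := wlim (absz p) (bin_digit alpha) in
  (fun n : nat => (nzeros (wprefix w n))%:R / n%:R : R) @ \oo --> r.
Proof.
move=> x p alpha w.
have r1 : 0 < 1 - r by rewrite subr_gt0.
have hx : (1 - r) * x = 5 * r - 2 by rewrite /x mulrC -mulrA mulVf ?mulr1 // gt_eqF.
have h25 : 2 < 5 * r by move: hr1; rewrite ltr_pdivrMr // mulrC.
have x0 : 0 < x by rewrite /x divr_gt0 //; lra.
have p0 : 0 < p by rewrite /p ceil_gt0.
set P := absz p.
have hP : P%:R = p%:~R :> R by rewrite /P -[in RHS](gez0_abs (ltW p0)).
have P1 : (1 <= P)%N by rewrite /P -ltz_nat abszE gtr0_norm.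
have a0 : 0 <= alpha by rewrite /alpha subr_ge0 ceil_ge.
have a1 : alpha < 1.
  rewrite /alpha; have := ceil_itv x; rewrite intrB /= => /andP[h _]; lra.
have hPa : P%:R - x = alpha by rewrite hP.
have r01 : 0 <= r <= 1 by apply/andP; split; lra.
have hE : forall j, `|FF r (wstage P (bin_digit alpha) j)| <= 1.
  move=> j; rewrite (@FF_stage _ r P alpha x a0 a1 hx hPa P1).
  have f1 := floor_le (alpha * 2 ^+ j).
  have f2 := floorD1_gt (alpha * 2 ^+ j); rewrite intrD /= in f2.
  set y := alpha * 2 ^+ j in f1 f2 *; set F := (Num.floor y)%:~R in f1 f2 *.
  rewrite normrM gtr0_norm //.
  have : `|y - F - alpha| <= 1 by rewrite ler_norml; apply/andP; split; lra.
  move=> h; have : (1 - r) * `|y - F - alpha| <= 1 * 1 by apply: ler_pM; rewrite ?normr_ge0 //; lra.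
  by rewrite mulr1.
set D : R := (P + 7)%:R.
have D1 : 1 <= D by rewrite /D ler1n addnS.
have bnd : forall n, `|FF r (wprefix w n)| <= D * (trunc_log 2 n).+1%:R.
  move=> n; rewrite /w wprefixE; apply: take_bound => //; exact: wstage_size.
apply/cvgrPdist_lt => e e0.
set M := (Num.truncn (4 * D / e)).+1.
exists (2 ^ M)%N => // n /= hn.
have M1 : (1 <= M)%N by [].
have n0 : (0 < n)%N by apply: leq_trans hn; rewrite expn_gt0.
set k := trunc_log 2 n.
have kM : (M <= k)%N by apply: trunc_log_max.
have k2 : (2 ^ k <= n)%N by apply: trunc_logP.
have sq : ((k + 1) ^ 2 <= 4 * n)%N by apply: leq_trans (sq_le_pow k) _; rewrite leq_mul2l k2 orbT.
have sqR : (k.+1%:R) ^+ 2 <= 4 * n%:R :> R.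
  by rewrite -natrX -(natrM R 4) ler_nat addn1 in sq *.
have MR : 4 * D / e < M%:R by apply: truncnS_gt.
have kMR : M%:R <= k.+1%:R :> R by rewrite ler_nat; lia.
have eD : 4 * D < e * k.+1%:R.
  have := lt_le_trans MR kMR; rewrite ltr_pdivrMr // => h; nra.
have nR : 0 < n%:R :> R by rewrite ltr0n.
have hb := bnd n. rewrite -/k in hb.
have -> : (nzeros (wprefix w n))%:R / n%:R = r + FF r (wprefix w n) / n%:R.
  rewrite /FF size_mkseq; field; lra.
rewrite opprD addrA subrr sub0r normrN normrM normfV normr_nat.
rewrite ltr_pdivrMr //.
apply: le_lt_trans hb _.
have k0 : 0 < k.+1%:R :> R by rewrite ltr0n.
nra.
Qed.
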